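(* Let $n\ge 2$, let $M=(\mathbf{R}^3)^n\setminus\{(p_0,\ldots,p_0)\mid p_0\in\mathbf{R}^3\}$, and let $X$ be a vector field on $M$ (with $T_pM$ identified with $(\mathbf{R}^3)^n$) whose components $X_1,\ldots,X_n\colon M\to\mathbf{R}^3$ are homogeneous quadratic polynomials in the coordinates of $p=(p_1,\ldots,p_n)$, and which is translation invariant, i.e. $X_{p+(p_0,\ldots,p_0)}=X_p$ for all $p_0\in\mathbf{R}^3$. Define $\Psi(v)=v/\sqrt{\|v\|}$ for $v\neq 0$ and $\Psi(0)=0$. Then $Y=\Psi(X)$ descends to a vector field on the quotient $N=M/\sim$: for all $p,p'\in M$ with $p\sim p'$ one has $D(\pi)_p(\Psi(X_p))=D(\pi)_{p'}(\Psi(X_{p'}))$, so that $Y_q=D(\pi)(\Psi(X_p))$ with $\pi(p)=q$ is a well-defined vector field on $N$.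
   Context: The equivalence relation $\sim$ on $M$ is generated by $p\sim\lambda p$ for $\lambda>0$ and $p\sim p+(p_0,\ldots,p_0)$ for $p_0\in\mathbf{R}^3$. The maps are $\tau\colon(\mathbf{R}^3)^n\to(\mathbf{R}^3)^n$, $\tau(p_1,\ldots,p_n)=(p_1-p_n,\ldots,p_{n-1}-p_n,0)$, $\sigma(p)=p/\|p\|$ on $(\mathbf{R}^3)^n\setminus\{0\}$, and $\pi=\sigma\circ\tau\colon M\to S^{3(n-1)-1}$, where $S^{3(n-1)-1}=\{p\in(\mathbf{R}^3)^n: p_n=0,\ \|p\|=1\}$; $N$ is identified with this sphere via $\pi$, with the round metric. $D(\pi)$ denotes the differential of $\pi$. *)

(* Defs.v *)
(* MathComp + MathComp-Analysis, R : realType.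
   (R^3)^n is represented as n x 3 real matrices 'M[R]_(n,3): row i = p_(i+1). *)
From HB Require Import structures.
From mathcomp Require Import all_boot all_order all_algebra.
From mathcomp Require Import all_classical all_reals all_analysis.
From Stdlib Require Import Relations.
Set Implicit Arguments. Unset Strict Implicit. Unset Printing Implicit Defensive.
Import Order.TTheory GRing.Theory Num.Theory.
Import numFieldNormedType.Exports.
Local Open Scope ring_scope.

Section Defs.
Variables (R : realType) (n : nat).
Notation V := 'M[R]_(n, 3).

Definition eucl (p : V) : R := Num.sqrt (\sum_(i < n) \sum_(k < 3) p i k ^+ 2).

Definition diagpt (p0 : 'rV[R]_3) : V := \matrix_(i < n, k < 3) p0 ord0 k.

Definition inM (p : V) : Prop := ~ (exists p0 : 'rV[R]_3, p = diagpt p0).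

Definition sim_step (p q : V) : Prop :=
  inM p /\ inM q /\
  ((exists lam : R, 0 < lam /\ q = lam *: p) \/
   (exists p0 : 'rV[R]_3, q = p + diagpt p0)).

Definition sim : V -> V -> Prop := clos_refl_sym_trans V sim_step.

(* last point p_n (for n >= 1) *)
Definition lastpt (p : V) : 'rV[R]_3 := \sum_(j < n | (j : nat) == n.-1) row j p.

Definition tau (p : V) : V := \matrix_(i < n, k < 3) (p i k - lastpt p ord0 k).

Definition sigma (p : V) : V := (eucl p)^-1 *: p.

Definition pi_map (p : V) : V := sigma (tau p).

Definition Psi (v : V) : V := if v == 0 then 0 else (Num.sqrt (eucl v))^-1 *: v.

Definition hom_quadratic (X : V -> V) : Prop :=
  forall (i : 'I_n) (k : 'I_3), exists c : 'I_n -> 'I_3 -> 'I_n -> 'I_3 -> R,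
    forall p : V, inM p ->
      X p i k = \sum_(j < n) \sum_(l < 3) \sum_(j' < n) \sum_(l' < 3)
                  c j l j' l' * (p j l * p j' l').

Definition transl_invariant (X : V -> V) : Prop :=
  forall (p : V) (p0 : 'rV[R]_3), inM p -> X (p + diagpt p0) = X p.

End Defs.

(* Main.v *)
Require Import Defs.
From HB Require Import structures.
From mathcomp Require Import all_boot all_order all_algebra.
From mathcomp Require Import all_classical all_reals all_analysis.
From mathcomp Require Import ring.
Import Order.TTheory GRing.Theory Num.Theory.
Import numFieldNormedType.Exports.
Local Open Scope ring_scope.
Section Aux.
Variables (R : realType).

Lemma diff_sumR (V : normedModType R) m (f : 'I_m -> V -> R) x :
  (forall i, differentiable (f i) x) ->
  differentiable (fun y => \sum_(i < m) f i y) x.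
Proof.
move=> H; rewrite -(fct_sumE (index_enum _) xpredT f).
exact: differentiable_sum.
Qed.

Lemma diff_mx (V : normedModType R) a b (g : V -> 'M[R]_(a, b)) x :
  (forall i j, differentiable (fun y => g y i j) x) -> differentiable g x.
Proof.
move=> H.
have -> : g = fun y => \sum_(i < a) \sum_(j < b) g y i j *: delta_mx i j.
  by apply: funext => y; rewrite {1}(matrix_sum_delta (g y)).
rewrite -(fct_sumE (index_enum _) xpredT).
apply: differentiable_sum => i.
rewrite -(fct_sumE (index_enum _) xpredT).
apply: differentiable_sum => j.
exact: differentiableZl.
Qed.

Lemma diff_sqrt (V : normedModType R) (f : V -> R) x :
  differentiable f x -> 0 < f x -> differentiable (fun y => Num.sqrt (f y)) x.
Proof.
move=> df fx; apply: (differentiable_comp (g := Num.sqrt)) => //.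
apply/derivable1_diffP.
have := is_derive1_sqrt fx.
by case.
Qed.

Section Pi.
Variables (n : nat) (n0 : (0 < n)%N).
Local Notation V := 'M[R]_(n, 3).
Let i0 : 'I_n := @Ordinal n n.-1 (ltac:(by rewrite prednK)).
Let Vn := 'M[R]_(n, 3).
Lemma tauE (p : V) i k : tau p i k = p i k - p i0 k.
Proof.
rewrite /tau /lastpt !mxE (big_pred1 i0) ?mxE //.
Qed.

Lemma eucl_ge0 (p : V) : 0 <= \sum_(i < n) \sum_(k < 3) p i k ^+ 2.
Proof. by apply: sumr_ge0 => i _; apply: sumr_ge0 => k _; apply: sqr_ge0. Qed.

Lemma euclZ (a : R) (p : V) : eucl (a *: p) = `|a| * eucl p.
Proof.
rewrite /eucl.
have -> : \sum_(i < n) \sum_(k < 3) (a *: p) i k ^+ 2 =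
   a ^+ 2 * \sum_(i < n) \sum_(k < 3) p i k ^+ 2.
  rewrite mulr_sumr; apply: eq_bigr => i _; rewrite mulr_sumr.
  by apply: eq_bigr => k _; rewrite mxE exprMn.
by rewrite sqrtrM ?sqr_ge0 // sqrtr_sqr.
Qed.

Lemma tauZ (a : R) (p : V) : tau (a *: p) = a *: tau p.
Proof. by apply/matrixP => i k; rewrite !tauE [in RHS]mxE tauE !mxE mulrBr. Qed.

Lemma tau_transl (p : V) d : tau (p + diagpt n d) = tau p.
Proof. by apply/matrixP => i k; rewrite !tauE [_ i k]mxE [_ i0 k]mxE !mxE opprD addrACA subrr addr0. Qed.

Lemma pi_transl (p : V) d : pi_map (p + diagpt n d) = pi_map p.
Proof. by rewrite /pi_map tau_transl. Qed.

Lemma pi_scale (a : R) (p : V) : 0 < a -> pi_map (a *: p) = pi_map p.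
Proof.
move=> a0; rewrite /pi_map /sigma tauZ euclZ scalerA gtr0_norm // invfM.
by rewrite mulrC mulrA mulfV ?mul1r // gt_eqF.
Qed.

Lemma tau_neq0 (p : V) : inM p -> tau p != 0.
Proof.
move=> hp; apply/eqP => h; apply: hp; exists (row i0 p).
apply/matrixP => i k; move/matrixP: h => /(_ i k); rewrite tauE !mxE.
by move/eqP; rewrite subr_eq0 => /eqP.
Qed.

Lemma pi_diff (p : V) : inM p -> differentiable (@pi_map R n) p.
Proof.
move=> hp.
have dtau i k : differentiable (fun y : V => tau y i k) p.
  have -> : (fun y : V => tau y i k) = (fun y : V => y i k) - (fun y : V => y i0 k).
    by apply: funext => y; rewrite tauE.
  by apply: differentiableB; apply: differentiable_coord.
have pos : 0 < \sum_(i < n) \sum_(k < 3) tau p i k ^+ 2.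
  rewrite lt_def eucl_ge0 andbT; apply/negP => /eqP h; move/negP: (tau_neq0 p hp); apply.
  apply/eqP/matrixP => i k; rewrite [RHS]mxE.
  move/eqP: h; rewrite psumr_eq0; last by move=> j _; apply: sumr_ge0 => *; apply: sqr_ge0.
  move=> /allP /(_ i (mem_index_enum _)) /implyP /(_ isT).
  rewrite psumr_eq0; last by move=> *; apply: sqr_ge0.
  move=> /allP /(_ k (mem_index_enum _)) /implyP /(_ isT).
  by rewrite sqrf_eq0 => /eqP.
have de : differentiable (fun y : V => eucl (tau y)) p.
  apply: diff_sqrt => //; apply: diff_sumR => i; apply: diff_sumR => k.
  by rewrite /GRing.exp /=; apply: differentiableM.
apply: diff_mx => i k.
have -> : (fun y => pi_map y i k) = (fun y : V => (eucl (tau y))^-1 * tau y i k).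
  by apply: funext => y; rewrite /pi_map /sigma mxE.
apply: (differentiableM (f := fun y : V => (eucl (tau y))^-1)) => //.
apply: differentiableV => //.
by rewrite /eucl gt_eqF // sqrtr_gt0.
Qed.
End Pi.
End Aux.
Lemma Psi_sq (R : realType) (n : nat) (lam : R) (v : 'M[R]_(n, 3)) : 0 < lam ->
  Psi (lam ^+ 2 *: v) = lam *: Psi v.
Proof.
move=> l0; rewrite /Psi scaler_eq0 expf_eq0 /= (gt_eqF l0) /=.
case: ifP => [_|_]; first by rewrite scaler0.
rewrite euclZ.
rewrite ger0_norm; last exact: sqr_ge0.
rewrite sqrtrM; last exact: sqr_ge0.
rewrite sqrtr_sqr gtr0_norm //.
rewrite !scalerA invfM; congr (_ *: _).
have ln : lam != 0 by rewrite gt_eqF.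
by rewrite mulrAC expr2 mulrA mulVf // mul1r.
Qed.
Lemma X_scale (R : realType) (n : nat) (X : 'M[R]_(n, 3) -> 'M[R]_(n, 3))
  (lam : R) (x : 'M[R]_(n, 3)) :
  hom_quadratic X -> inM x -> inM (lam *: x) -> X (lam *: x) = lam ^+ 2 *: X x.
Proof.
move=> hq hx hy.
apply/matrixP => i k; have [c hc] := hq i k.
rewrite (hc _ hy) [RHS]mxE (hc _ hx) mulr_sumr; apply: eq_bigr => j _.
rewrite mulr_sumr; apply: eq_bigr => l _.
rewrite mulr_sumr; apply: eq_bigr => j' _.
rewrite mulr_sumr; apply: eq_bigr => l' _.
rewrite [(lam *: x) j l]mxE [(lam *: x) j' l']mxE.
by ring.
Qed.
Lemma d_scale (R : realType) (n : nat) (n0 : (0 < n)%N) (lam : R) (x w : 'M[R]_(n, 3)) :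
  0 < lam -> inM (lam *: x) ->
  'd (@pi_map R n) x w = 'd (@pi_map R n) (lam *: x) (lam *: w).
Proof.
move=> l0 hy.
Timeout 20 have F : @pi_map R n = @pi_map R n \o ( *:%R lam).
  by apply: funext => y /=; rewrite pi_scale.
Timeout 20 have d1 := (@ex_diff _ _ _ _ _ _ _ (is_diff_scaler lam x)).
Timeout 20 have d2 := @pi_diff R n n0 _ hy.
Timeout 20 have E := diff_comp d1 d2.
Timeout 20 rewrite -F in E.
Timeout 20 have E2 := (@diff_val _ _ _ _ _ _ _ (is_diff_scaler lam x)).
Timeout 20 have E3 := congr1 (fun f => f w) E.
Timeout 20 cbv beta in E3.
Timeout 20 apply: (etrans E3).

Timeout 60 exact: (congr1 ('d (@pi_map R n) (lam *: x)) (congr1 (fun f => f w) E2)).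
Qed.

Lemma d_transl (R : realType) (n : nat) (n0 : (0 < n)%N) (d : 'rV[R]_3) (x w : 'M[R]_(n, 3)) :
  inM (x + diagpt n d) ->
  'd (@pi_map R n) x w = 'd (@pi_map R n) (x + diagpt n d) w.
Proof.
move=> hy.
Timeout 20 have F : @pi_map R n = @pi_map R n \o (id + cst (diagpt n d)).
  by apply: funext => y /=; rewrite pi_transl.
pose I := is_diffD (is_diff_id x) (is_diff_cst (diagpt n d) x).
Timeout 20 have d1 := (@ex_diff _ _ _ _ _ _ _ I).
Timeout 20 have d2 := @pi_diff R n n0 _ hy.
Timeout 20 have E := diff_comp d1 d2.
Timeout 20 rewrite -F in E.
Timeout 20 have E2 := (@diff_val _ _ _ _ _ _ _ I).
Timeout 20 have E3 := congr1 (fun f => f w) E.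
Timeout 20 cbv beta in E3.
Timeout 20 apply: (etrans E3).
Timeout 60 apply: (etrans (congr1 ('d (@pi_map R n) (x + diagpt n d)) (congr1 (fun f => f w) E2))).
Timeout 60 exact: (congr1 ('d (@pi_map R n) (x + diagpt n d)) (addr0 w)).
Qed.
Theorem lemma2 (R : realType) (n : nat) (hn : (2 <= n)%N)
  (X : 'M[R]_(n, 3) -> 'M[R]_(n, 3)) :
  hom_quadratic X -> transl_invariant X ->
  forall p p' : 'M[R]_(n, 3), inM p -> inM p' -> sim p p' ->
    'd (@pi_map R n) p (Psi (X p)) = 'd (@pi_map R n) p' (Psi (X p')).
Proof.
move=> hq ht p p' _ _ hs.
have n0 : (0 < n)%N by apply: leq_trans hn.
elim: hs => [x y st | x | x y _ IH | x y z _ IH1 _ IH2];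
  [ | done | exact: (esym IH) | exact: (etrans IH1 IH2)].
case: st => hx [hy [[lam [lam0 ey]] | [d ey]]]; subst y.
- have e : lam *: Psi (X x) = Psi (X (lam *: x)).
    by rewrite (@X_scale R n X lam x hq hx hy) (@Psi_sq R n lam _ lam0).
  exact: (etrans (@d_scale R n n0 lam x (Psi (X x)) lam0 hy)
            (congr1 ('d (@pi_map R n) (lam *: x)) e)).
- have e : Psi (X x) = Psi (X (x + diagpt n d)) by rewrite ht.
  exact: (etrans (@d_transl R n n0 d x (Psi (X x)) hy)
            (congr1 ('d (@pi_map R n) (x + diagpt n d)) e)).
Qed.
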